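(* Let $d\ge 3$ and $0\le j\le \left\lfloor \frac{3(d-1)}{2}\right\rfloor$. The elements of $\operatorname{Ker}(E)\cap A(d)_j$ on which every $\sigma\in S_3$ acts by $\operatorname{sgn}(\sigma)$ are exactly the elements $P=\sum_{\mu\in\mathscr{P}^+_{3,d-1}(j)}\beta_\mu\langle x^\mu\rangle$ ($\beta_\mu\in\Bbbk$) with $E(P)=0$, and the multiplicity of the sign representation in $\operatorname{Ker}(E)\cap A(d)_j$ is $$\operatorname{sign}(d,j)=p^+_{3,d-1}(j)-p^+_{3,d-1}(j-1).$$
   Context: $\Bbbk$ is an algebraically closed field of characteristic $0$. For an integer $d\ge 1$, $A(d)=\Bbbk[x_1,x_2,x_3]/(x_1^d,x_2^d,x_3^d)=\bigoplus_j A(d)_j$ with its standard grading. The symmetric group $S_3$ acts on $A(d)$ by permuting the variables. The linear map $E:A(d)_{j+1}\to A(d)_j$ is defined on the monomial basis by $E(x_1^{a_1}x_2^{a_2}x_3^{a_3})=\sum_{k=1}^{3} a_k(d-a_k)\,x_1^{a_1}\cdots x_k^{a_k-1}\cdots x_3^{a_3}$; it commutes with the $S_3$-action. $\operatorname{sign}(d,j)$ denotes the multiplicity of the sign representation in $\operatorname{Ker}(E)\cap A(d)_j$. For integers $l\ge0$, $n$: $\mathscr{P}^+_{3,l}(n)$ is the set of integer triples $(a,b,c)$ with $l\ge a> b> c\ge 0$ and $a+b+c=n$, and $p^+_{3,l}(n)=|\mathscr{P}^+_{3,l}(n)|$ ($=0$ for $n<0$). For $\mu=(a,b,c)$, $\langle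 x^\mu\rangle=\sum_{\sigma\in S_3}\operatorname{sgn}(\sigma)\,\sigma(x_1^ax_2^bx_3^c)$. *)

(* Defs.v *)
From HB Require Import structures.
From mathcomp Require Import all_boot all_order all_algebra all_fingroup.
Set Implicit Arguments. Unset Strict Implicit. Unset Printing Implicit Defensive.
Import Order.TTheory GRing.Theory Num.Theory.
Local Open Scope ring_scope.

Section Defs.
Variable K : fieldType.
Variable d : nat.

(* Exponent vectors (a_1,a_2,a_3) with 0 <= a_k <= d-1, i.e. the monomial
   basis of A(d) = K[x1,x2,x3]/(x1^d,x2^d,x3^d).  For d >= 1, 'I_(d.-1).+1
   is {0,...,d-1}. *)
Definition mon := {ffun 'I_3 -> 'I_(d.-1).+1}.

(* A(d) as the K-vector space with basis the monomials. *)
Definition Alg := {ffun mon -> K^o}.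

Definition deg (a : mon) : nat := (\sum_(i < 3) (a i : nat))%N.

Definition mono (a : mon) : Alg := [ffun b => (b == a)%:R].

Definition homog (j : nat) (P : Alg) : Prop := forall a, P a != 0 -> deg a = j.
Definition Ahom (j : nat) : {vspace Alg} :=
  <<[seq mono a | a <- enum [pred a : mon | deg a == j]]>>%VS.

Lemma pred_ord_lt (n : nat) (i : 'I_n.+1) : ((i : nat).-1 < n.+1)%N.
Proof. exact: leq_ltn_trans (leq_pred _) (ltn_ord i). Qed.

Definition decr (a : mon) (k : 'I_3) : mon :=
  [ffun i => if i == k then Ordinal (pred_ord_lt (a k)) else a i].

(* E(x^a) = sum_k a_k (d - a_k) x^(a - e_k) ; when a_k = 0 the coefficient
   vanishes, so the value of decr is irrelevant there. *)
Definition Emon (a : mon) : Alg :=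
  \sum_(k < 3) (((a k : nat) * (d - a k))%N)%:R *: mono (decr a k).

Definition E (P : Alg) : Alg := \sum_a P a *: Emon a.

(* permutation action: sigma(x_1^a1 x_2^a2 x_3^a3) = x_{s1}^a1 x_{s2}^a2 x_{s3}^a3,
   i.e. the exponent vector b of the image satisfies b (s i) = a i. *)
Definition actm (s : 'S_3) (a : mon) : mon := [ffun i => a ((s^-1)%g i)].
Definition sact (s : 'S_3) (P : Alg) : Alg := \sum_a P a *: mono (actm s a).

Definition alt (mu : mon) : Alg := \sum_(s : 'S_3) ((-1) ^+ s) *: mono (actm s mu).

Definition signspace (j : nat) : {vspace Alg} :=
  (Ahom j :&: lker (linfun E) :&:
   \bigcap_(s : 'S_3) lker (linfun (fun P => sact s P - ((-1) ^+ s) *: P)))%VS.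

(* sign(d,j): multiplicity of the sign representation in Ker(E) ∩ A(d)_j
   = dimension of its sign-isotypic component (sgn is one-dimensional). *)
Definition signmult (j : nat) : nat := \dim (signspace j).

End Defs.

(* P^+_{3,l}(n): triples l >= a > b > c >= 0 with a+b+c = n, encoded as
   functions 'I_3 -> 'I_l.+1 (mu 0 = a, mu 1 = b, mu 2 = c). *)
Definition Pplus (l : nat) (n : int) : {set {ffun 'I_3 -> 'I_l.+1}} :=
  [set mu : {ffun 'I_3 -> 'I_l.+1} |
     [&& (mu (@inord 2 1) < mu ord0)%N, (mu (@inord 2 2) < mu (@inord 2 1))%N
       & ((\sum_(i < 3) (mu i : nat))%N%:Z == n)]].

Definition pplus (l : nat) (n : int) : nat := #|Pplus l n|.

(* Main.v *)
Require Import Defs.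
From HB Require Import structures.
From mathcomp Require Import all_boot all_order all_algebra all_fingroup zify ring.
Import Order.TTheory GRing.Theory Num.Theory.
Local Open Scope ring_scope.
Set Implicit Arguments. Unset Strict Implicit. Unset Printing Implicit Defensive.

Section Dev.
Variable K : fieldType.
Variable d : nat.
Hypothesis d_gt0 : (0 < d)%N.

Local Notation mon := (mon d).
Local Notation Alg := (Alg K d).
Local Notation actm := (@Defs.actm d).

Lemma mon_le (b : mon) k : (b k <= d.-1)%N.
Proof. by rewrite -ltnS ltn_ord. Qed.

Definition incr (b : mon) (k : 'I_3) : mon :=
  [ffun i => if i == k then inord (b k).+1 else b i].

Lemma incr_k (b : mon) (k : 'I_3) : (b k < d.-1)%N -> (incr b k k : nat) = (b k).+1.
Proof. by move=> h; rewrite ffunE eqxx inordK. Qed.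
Lemma incr_i (b : mon) (k i : 'I_3) : i != k -> incr b k i = b i.
Proof. by move=> h; rewrite ffunE (negbTE h). Qed.
Lemma decr_k (a : mon) (k : 'I_3) : (decr a k k : nat) = (a k).-1.
Proof. by rewrite ffunE eqxx. Qed.
Lemma decr_i (a : mon) (k i : 'I_3) : i != k -> decr a k i = a i.
Proof. by move=> h; rewrite ffunE (negbTE h). Qed.

Lemma decr_incr (b : mon) (k : 'I_3) : (b k < d.-1)%N -> decr (incr b k) k = b.
Proof.
move=> h; apply/ffunP => i; case: (eqVneq i k) => [->|ne].
  by apply/val_inj; rewrite /= decr_k incr_k.
by rewrite decr_i // incr_i.
Qed.

Lemma incr_decr (b : mon) (k : 'I_3) : (0 < b k)%N -> incr (decr b k) k = b.
Proof.
move=> h; apply/ffunP => i; case: (eqVneq i k) => [->|ne].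
  apply/val_inj; rewrite /= incr_k decr_k; first by rewrite prednK.
  have := mon_le b k; lia.
by rewrite incr_i // decr_i.
Qed.

Lemma decr_incr_ne (b : mon) (k l : 'I_3) : k != l -> decr (incr b k) l = incr (decr b l) k.
Proof.
move=> kl; apply/ffunP => i; case: (eqVneq i k) => [->|ik].
  by rewrite decr_i // !ffunE eqxx (negbTE kl).
have lk : l != k by rewrite eq_sym.
case: (eqVneq i l) => [->|il].
  by apply/val_inj; rewrite /= decr_k (incr_i _ lk) (incr_i _ lk) decr_k.
by rewrite decr_i // !incr_i // decr_i.
Qed.

Lemma deg_incr (b : mon) (k : 'I_3) : (b k < d.-1)%N -> deg (incr b k) = (deg b).+1.
Proof.
move=> h; rewrite /deg (bigD1 k) //= [in RHS](bigD1 k) //= incr_k //.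
rewrite (eq_bigr (fun i => (b i : nat))) => [|i ne]; last by rewrite incr_i.
by rewrite addSn.
Qed.

Lemma deg_decr (b : mon) (k : 'I_3) : (0 < b k)%N -> deg (decr b k) = (deg b).-1.
Proof.
move=> h; rewrite /deg (bigD1 k) //= [in RHS](bigD1 k) //= decr_k.
rewrite (eq_bigr (fun i => (b i : nat))) => [|i ne]; last by rewrite decr_i.
by move: h; case: (b k : nat) => //= n _; rewrite addSn.
Qed.

Definition ecoef (b : mon) k : K := ((b k).+1 * (d.-1 - b k))%:R.

Lemma ecoef0 (b : mon) (k : 'I_3) : ~~ (b k < d.-1)%N -> ecoef b k = 0.
Proof.
move=> h; rewrite /ecoef; have -> : (d.-1 - b k = 0)%N by lia.
by rewrite muln0.
Qed.

Lemma E_pt (P : Alg) (b : mon) : E P b = \sum_k ecoef b k * P (incr b k).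
Proof.
rewrite /E sum_ffunE.
under eq_bigr => a _ do rewrite ffunE /Emon sum_ffunE scaler_sumr.
rewrite exchange_big /=; apply: eq_bigr => k _.
have key : forall a : mon, P a *: ((((a k : nat) * (d - a k))%N%:R *: mono K (decr a k)) b)
   = (a == incr b k)%:R * (ecoef b k * P (incr b k)).
  move=> a; rewrite !ffunE /GRing.scale /=.
  case: (eqVneq a (incr b k)) => [->|ne].
    case: (ltnP (b k) d.-1) => h.
      rewrite decr_incr // eqxx incr_k // mulr1 mul1r mulrC /ecoef.
      congr (_ * _); congr (_%:R); have := mon_le b k; lia.
    rewrite ecoef0 -?leqNgt // !mul0r mulr0.
    case: (eqVneq b (decr (incr b k) k)) => e; last by rewrite mulr0 mulr0.
    suff -> : ((incr b k k : nat) * (d - incr b k k) = 0)%N by rewrite mul0r mulr0.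
    have := mon_le (incr b k) k; have := decr_k (incr b k) k; rewrite -e.
    have := mon_le b k; move=> h1 h2 h3.
    have [->|->] : ((incr b k k : nat) = 0 \/ d - incr b k k = 0)%N by lia.
      by []. by rewrite muln0.
  rewrite mul0r.
  case: (eqVneq b (decr a k)) => e; last by rewrite !mulr0.
  case: (posnP (a k)) => ak; first by rewrite ak mul0n !mul0r mulr0.
  by move: ne; rewrite e incr_decr ?eqxx.
under eq_bigr => a _ do rewrite key.
rewrite (bigD1 (incr b k)) //= eqxx mul1r big1 ?addr0 // => a /negbTE ->.
by rewrite mul0r.
Qed.


Definition Fop (P : Alg) : Alg :=
  [ffun b : mon => \sum_k (if (0 < b k)%N then P (decr b k) else 0)].

Lemma Fop_lin (c : K) (P Q : Alg) : Fop (c *: P + Q) = c *: Fop P + Fop Q.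
Proof.
apply/ffunP => b; rewrite !ffunE scaler_sumr -big_split /=; apply: eq_bigr => k _.
by case: ifP => _; rewrite ?ffunE // /GRing.scale /= mulr0 addr0.
Qed.

Lemma Fop0 : Fop 0 = 0.
Proof. by apply/ffunP => b; rewrite !ffunE big1 // => k _; rewrite ffunE; case: ifP. Qed.

Lemma FopZ (c : K) (P : Alg) : Fop (c *: P) = c *: Fop P.
Proof. by rewrite -[c *: P]addr0 Fop_lin Fop0 addr0. Qed.

Lemma E_lin (c : K) (P Q : Alg) : E (c *: P + Q) = c *: E P + E Q.
Proof.
apply/ffunP => b; rewrite !ffunE !E_pt scaler_sumr -big_split /=; apply: eq_bigr => k _.
by rewrite !ffunE /GRing.scale /= mulrDr mulrCA.
Qed.

Lemma E0 : E (0 : Alg) = 0.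
Proof. by apply/ffunP => b; rewrite E_pt !ffunE big1 // => k _; rewrite ffunE mulr0. Qed.

Lemma EZ (c : K) (P : Alg) : E (c *: P) = c *: E P.
Proof. by rewrite -[c *: P]addr0 E_lin E0 addr0. Qed.

Lemma EB (P Q : Alg) : E (P - Q) = E P - E Q.
Proof. by rewrite addrC -scaleN1r E_lin scaleN1r addrC. Qed.

Lemma E_sum (I : finType) (Pr : pred I) (F : I -> Alg) :
  E (\sum_(i | Pr i) F i) = \sum_(i | Pr i) E (F i).
Proof.
elim/big_rec2: _ => [|i x y _ <-]; first exact: E0.
by have := E_lin 1 (F i) y; rewrite !scale1r.
Qed.

Definition cc (b : mon) : K := \sum_k ((d.-1 - b k)%:R - (b k)%:R).

Lemma nat_ident (x m : nat) : (x <= m)%N ->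
  ((x.+1 * (m - x))%:R : K) =
  (if (0 < x)%N then (x * (m - x.-1))%:R else 0) + ((m - x)%:R - x%:R).
Proof.
move=> h; case: x h => [|x] h /=; first by rewrite mul1n add0r subr0.
have -> : (x.+2 * (m - x.+1) = x.+1 * (m - x) + (m - x.+1) - x.+1)%N.
  have [r ->] : exists r, m = (x.+1 + r)%N by exists (m - x.+1)%N; lia.
  have -> : (x.+1 + r - x.+1 = r)%N by lia.
  have -> : (x.+1 + r - x = r.+1)%N by lia.
  nia.
rewrite natrB; last by nia.
by rewrite natrD addrA.
Qed.

Lemma EF_FE (P : Alg) (b : mon) : E (Fop P) b = Fop (E P) b + cc b * P b.
Proof.
rewrite E_pt ffunE /cc mulr_suml.
have lhs : forall k, ecoef b k * Fop P (incr b k) =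
   \sum_l (if (0 < b l)%N then ecoef (decr b l) k * P (incr (decr b l) k) else 0)
   + ((d.-1 - b k)%:R - (b k)%:R) * P b.
  move=> k; rewrite ffunE mulr_sumr (bigD1 k) //= [X in _ = X + _](bigD1 k) //=.
  rewrite addrAC; congr (_ + _); last first.
    apply: eq_bigr => l lk; rewrite incr_i // decr_incr_ne 1?eq_sym //.
    rewrite /ecoef decr_i 1?eq_sym //.
    by case: ifP; rewrite ?mulr0.
  have -> : ecoef b k * (if (0 < incr b k k)%N then P (decr (incr b k) k) else 0)
          = ecoef b k * P b.
    case: (ltnP (b k) d.-1) => h; first by rewrite incr_k // decr_incr.
    by rewrite ecoef0 -?leqNgt // !mul0r.
  have -> : (if (0 < b k)%N then ecoef (decr b k) k * P (incr (decr b k) k) else 0)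
         = (if (0 < b k)%N then ((b k) * (d.-1 - (b k).-1))%:R else 0) * P b.
    case: ifP => h; last by rewrite mul0r.
    by rewrite incr_decr // /ecoef decr_k prednK.
  by rewrite /ecoef nat_ident ?mon_le // mulrDl.
under eq_bigr => k _ do rewrite lhs.
rewrite big_split /=; congr (_ + _).
rewrite exchange_big /=; apply: eq_bigr => l _.
by case: ifP => _; rewrite ?E_pt // big1.
Qed.


Hypothesis charK : [pchar K] =i pred0.

Lemma natr_neq0 n : (0 < n)%N -> (n%:R : K) != 0.
Proof. by move=> h; rewrite (proj1 (pcharf0P K) charK); lia. Qed.

Lemma homog_eq0 t (P : Alg) b : homog t P -> deg b != t -> P b = 0.
Proof. by move=> h; apply: contraNeq => /h ->. Qed.

Lemma sum_sub_deg (b : mon) : (\sum_k (d.-1 - b k) = 3 * d.-1 - deg b)%N.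
Proof.
have : (\sum_k (d.-1 - b k) + deg b = 3 * d.-1)%N.
  rewrite /deg -big_split /=.
  rewrite (eq_bigr (fun _ => d.-1)) => [|k _]; last by rewrite subnK ?mon_le.
  by rewrite sum_nat_const card_ord.
lia.
Qed.

Lemma cc_homog t (P : Alg) b : homog t P ->
  cc b * P b = ((3 * d.-1 - t)%:R - t%:R) * P b.
Proof.
move=> h; case: (eqVneq (P b) 0) => [->|/h e]; first by rewrite !mulr0.
by rewrite /cc sumrB -!natr_sum sum_sub_deg -e.
Qed.

Lemma E_homog t (P : Alg) b : homog t P -> E P b != 0 -> (deg b).+1 = t.
Proof.
move=> h; apply: contraNeq => ne; rewrite E_pt big1 // => k _.
case: (ltnP (b k) d.-1) => hk; last by rewrite ecoef0 -?leqNgt // mul0r.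
by rewrite (homog_eq0 h) ?mulr0 // deg_incr.
Qed.

Lemma homog_E t (P : Alg) : homog t P -> homog t.-1 (E P).
Proof. by move=> h b /(E_homog h) <-. Qed.

Lemma Fop_homog t (P : Alg) : homog t P -> homog t.+1 (Fop P).
Proof.
move=> h b; rewrite ffunE; apply: contraNeq => ne; rewrite big1 // => k _.
case: ifP => hk //; rewrite (homog_eq0 h) // deg_decr //.
apply: contra ne => /eqP <-; rewrite prednK //.
by apply: leq_trans hk _; rewrite /deg (bigD1 k) //= leq_addr.
Qed.

Lemma homogZ t c (P : Alg) : homog t P -> homog t (c *: P).
Proof.
move=> h b; rewrite ffunE /GRing.scale /= mulf_eq0 negb_or => /andP[_]; exact: h.
Qed.

Lemma homog0 t : homog t (0 : Alg).
Proof. by move=> b; rewrite ffunE eqxx. Qed.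

Lemma homogD t (P Q : Alg) : homog t P -> homog t Q -> homog t (P + Q).
Proof.
move=> hP hQ b; rewrite ffunE; case: (eqVneq (P b) 0) => [->|/hP //].
by rewrite add0r => /hQ.
Qed.

Lemma homog_sum t (I : Type) (r : seq I) (Pr : pred I) (F : I -> Alg) :
  (forall i, Pr i -> homog t (F i)) -> homog t (\sum_(i <- r | Pr i) F i).
Proof.
move=> h; elim/big_rec: _ => [|i x Pi hx]; first exact: homog0.
exact: homogD (h i Pi) hx.
Qed.

Lemma EF_homog t (P : Alg) : homog t P ->
  E (Fop P) = Fop (E P) + ((3 * d.-1 - t)%:R - t%:R) *: P.
Proof.
by move=> h; apply/ffunP => b; rewrite EF_FE (cc_homog _ h) !ffunE.
Qed.

Lemma R_lemma t : (2 * t <= 3 * d.-1 + 2)%N -> forall v : Alg, homog t v ->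
  forall n, (0 < n)%N -> Fop (E v) = - (n%:R) *: v -> v = 0.
Proof.
elim: t => [|t IH] ht v hv n n0 e.
  have E0v : E v = 0.
    by apply/ffunP => b; rewrite ffunE; apply/eqP; apply: contraT => /(E_homog hv).
  move: e; rewrite E0v Fop0 => /esym/eqP; rewrite scaler_eq0 oppr_eq0.
  by rewrite (negbTE (natr_neq0 n0)) => /eqP.
pose w := - (n%:R)^-1 *: E v.
have nK : (n%:R : K) != 0 := natr_neq0 n0.
have vw : v = Fop w.
  by rewrite /w FopZ e scalerA mulrNN mulVf // scale1r.
have hw : homog t w by apply: homogZ; exact: (homog_E hv).
have Ew : E (Fop w) = - (n%:R) *: w.
  by rewrite -vw /w scalerA mulrN mulNr opprK divff // scale1r.
have := EF_homog hw; rewrite Ew => e2.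
have e3 : Fop (E w) = - ((n + (3 * d.-1 - t) - t)%N%:R) *: w.
  apply: (addIr (((3 * d.-1 - t)%:R - t%:R) *: w)); rewrite -e2.
  rewrite -scalerDl; congr (_ *: _).
  rewrite natrB; last by lia.
  rewrite natrD; ring.
have w0 : w = 0 by apply: (IH _ w hw _ _ e3); lia.
by rewrite vw w0 Fop0.
Qed.

Lemma EF_inj t (v : Alg) : (2 * t + 2 <= 3 * d.-1)%N -> homog t v ->
  E (Fop v) = 0 -> v = 0.
Proof.
move=> ht hv e; apply: (R_lemma (t := t) _ hv (n := 3 * d.-1 - t - t)); try lia.
apply: (addIr (((3 * d.-1 - t)%:R - t%:R) *: v)).
rewrite -EF_homog // e -scalerDl natrB; last by lia.
by rewrite addNr scale0r.
Qed.


Local Notation sg s := ((-1) ^+ (odd_perm s) : K).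

Lemma sgM (s t : 'S_3) : sg (s * t)%g = sg s * sg t.
Proof. by rewrite odd_permM signr_addb. Qed.
Lemma sgV (s : 'S_3) : sg (s^-1)%g = sg s.
Proof. by rewrite odd_permV. Qed.
Lemma sgsg (s : 'S_3) : sg s * sg s = 1.
Proof. by rewrite -signr_addb addbb. Qed.

Lemma actmE (s : 'S_3) (a : mon) i : actm s a i = a ((s^-1)%g i).
Proof. by rewrite ffunE. Qed.

Lemma actm_comp (s t : 'S_3) (a : mon) : actm s (actm t a) = actm (t * s)%g a.
Proof. by apply/ffunP => i; rewrite !actmE invMg permM. Qed.

Lemma actm1 (a : mon) : actm 1%g a = a.
Proof. by apply/ffunP => i; rewrite actmE invg1 perm1. Qed.

Lemma actmK (s : 'S_3) (a : mon) : actm (s^-1)%g (actm s a) = a.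
Proof. by rewrite actm_comp mulgV actm1. Qed.
Lemma actmKV (s : 'S_3) (a : mon) : actm s (actm (s^-1)%g a) = a.
Proof. by rewrite actm_comp mulVg actm1. Qed.

Lemma monoE (a b : mon) : mono K a b = (b == a)%:R.
Proof. by rewrite ffunE. Qed.

Lemma sact_pt (s : 'S_3) (P : Alg) b : sact s P b = P (actm (s^-1)%g b).
Proof.
rewrite sum_ffunE (bigD1 (actm (s^-1)%g b)) //= big1 ?addr0.
  by rewrite ffunE monoE actmKV eqxx /GRing.scale /= mulr1.
move=> a ne; rewrite ffunE monoE; case: (eqVneq b (actm s a)) => [e|_].
  by move: ne; rewrite e actmK eqxx.
by rewrite /GRing.scale /= mulr0.
Qed.

Lemma sact_lin (s : 'S_3) c (P Q : Alg) : sact s (c *: P + Q) = c *: sact s P + sact s Q.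
Proof. by apply/ffunP => b; rewrite !ffunE !sact_pt !ffunE. Qed.

Lemma sact0 (s : 'S_3) : sact s (0 : Alg) = 0.
Proof. by apply/ffunP => b; rewrite sact_pt !ffunE. Qed.

Lemma sactZ (s : 'S_3) c (P : Alg) : sact s (c *: P) = c *: sact s P.
Proof. by rewrite -[c *: P]addr0 sact_lin sact0 addr0. Qed.

Lemma sact_sum (s : 'S_3) (I : finType) (Pr : pred I) (F : I -> Alg) :
  sact s (\sum_(i | Pr i) F i) = \sum_(i | Pr i) sact s (F i).
Proof.
elim/big_rec2: _ => [|i x y _ <-]; first exact: sact0.
by have := sact_lin s 1 (F i) y; rewrite !scale1r.
Qed.

Lemma sact_comp (s t : 'S_3) (P : Alg) : sact t (sact s P) = sact (s * t)%g P.
Proof. by apply/ffunP => b; rewrite !sact_pt actm_comp invMg. Qed.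

Lemma deg_actm (s : 'S_3) (a : mon) : deg (actm s a) = deg a.
Proof.
rewrite /deg (reindex_inj (@perm_inj _ s)) /=.
by apply: eq_bigr => i _; rewrite actmE permK.
Qed.

Lemma homog_sact t (s : 'S_3) (P : Alg) : homog t P -> homog t (sact s P).
Proof. by move=> h b; rewrite sact_pt => /h; rewrite deg_actm. Qed.

Lemma actm_incr (s : 'S_3) (b : mon) k :
  actm (s^-1)%g (incr b (s k)) = incr (actm (s^-1)%g b) k.
Proof.
apply/ffunP => i; rewrite !actmE invgK !ffunE (inj_eq (@perm_inj _ s)).
by rewrite invgK.
Qed.

Lemma E_sact (s : 'S_3) (P : Alg) : E (sact s P) = sact s (E P).
Proof.
apply/ffunP => b; rewrite E_pt sact_pt E_pt (reindex_inj (@perm_inj _ s)) /=.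
apply: eq_bigr => k _; rewrite sact_pt actm_incr; congr (_ * _).
by rewrite /ecoef actmE invgK.
Qed.

Definition isSign (P : Alg) := forall s : 'S_3, sact s P = sg s *: P.

Lemma isSign_pt (P : Alg) s b : isSign P -> P (actm (s^-1)%g b) = sg s * P b.
Proof. by move=> h; rewrite -sact_pt h ffunE. Qed.

Lemma E_sign (P : Alg) : isSign P -> isSign (E P).
Proof. by move=> h s; rewrite -E_sact h EZ. Qed.

Definition Asym (P : Alg) : Alg := \sum_(s : 'S_3) sg s *: sact s P.

Lemma Asym_sign (P : Alg) : isSign (Asym P).
Proof.
move=> t; rewrite /Asym sact_sum.
under eq_bigr => s _ do rewrite sactZ sact_comp.
rewrite (reindex_inj (mulIg (t^-1)%g)) /= scaler_sumr; apply: eq_bigr => u _.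
rewrite -mulgA mulVg mulg1 scalerA sgM sgV; congr (_ *: _).
exact: mulrC.
Qed.

Lemma E_Asym (P : Alg) : E (Asym P) = Asym (E P).
Proof. by rewrite /Asym E_sum; apply: eq_bigr => s _; rewrite EZ E_sact. Qed.

Lemma Asym_of_sign (P : Alg) : isSign P -> Asym P = 6%:R *: P.
Proof.
move=> h; rewrite /Asym.
under eq_bigr => s _ do rewrite h scalerA sgsg scale1r.
by rewrite sumr_const card_Sn scaler_nat.
Qed.

Lemma homog_Asym t (P : Alg) : homog t P -> homog t (Asym P).
Proof. by move=> h; apply: homog_sum => s _; apply: homogZ; apply: homog_sact. Qed.


Local Notation o0 := (ord0 : 'I_3).
Local Notation o1 := (@inord 2 1).
Local Notation o2 := (@inord 2 2).

Lemma val_o1 : (o1 : nat) = 1%N. Proof. by rewrite inordK. Qed.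
Lemma val_o2 : (o2 : nat) = 2%N. Proof. by rewrite inordK. Qed.

Lemma ord3 (i : 'I_3) : i = o0 \/ i = o1 \/ i = o2.
Proof.
case: i => [[|[|[|n]]] h] //; [left|right;left|right;right]; apply/val_inj.
  by []. by rewrite /= val_o1. by rewrite /= val_o2.
Qed.

Lemma o01 : (o0 == o1) = false. Proof. by rewrite -(inj_eq val_inj) /= val_o1. Qed.
Lemma o10 : (o1 == o0) = false. Proof. by rewrite eq_sym o01. Qed.
Lemma o02 : (o0 == o2) = false. Proof. by rewrite -(inj_eq val_inj) /= val_o2. Qed.
Lemma o20 : (o2 == o0) = false. Proof. by rewrite eq_sym o02. Qed.
Lemma o12 : (o1 == o2) = false. Proof. by rewrite -(inj_eq val_inj) /= val_o1 val_o2. Qed.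
Lemma o21 : (o2 == o1) = false. Proof. by rewrite eq_sym o12. Qed.
Definition oneq := (o01, o10, o02, o20, o12, o21).

Definition dec (mu : mon) := ((mu o1 < mu o0)%N && (mu o2 < mu o1)%N).

Lemma inPplus (mu : mon) n : (mu \in Pplus d.-1 n) = dec mu && ((deg mu)%:Z == n).
Proof. by rewrite inE /dec andbA. Qed.

Lemma dec_lt (mu : mon) : dec mu -> forall i j : 'I_3, (i < j)%N -> (mu j < mu i)%N.
Proof.
case/andP => h1 h2 i j.
have [->|[->|->]] := ord3 i; have [->|[->|->]] := ord3 j;
  rewrite /= ?val_o1 ?val_o2 // => _; lia.
Qed.

Lemma dec_uniq (mu : mon) (s : 'S_3) : dec mu -> dec (actm s mu) -> s = 1%g.
Proof.
move=> hm hs.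
have mono : forall i j : 'I_3, (i < j)%N -> ((s^-1)%g i < (s^-1)%g j)%N.
  move=> i j ij; rewrite ltnNge; apply/negP => le.
  have ne : (s^-1)%g j != (s^-1)%g i.
    by rewrite (inj_eq (@perm_inj _ _)) -(inj_eq val_inj) /=; apply/eqP; lia.
  have lt : ((s^-1)%g j < (s^-1)%g i)%N by rewrite ltn_neqAle -(inj_eq val_inj) in ne *; rewrite ne le.
  have := dec_lt hm lt; have := dec_lt hs ij; rewrite !actmE; lia.
have m01 := mono o0 o1; have m12 := mono o1 o2.
rewrite /= val_o1 val_o2 in m01 m12.
have l2 := ltn_ord ((s^-1)%g o2).
have e : (s^-1)%g = 1%g.
  apply/permP => i; rewrite perm1; apply/val_inj.
  have := m01 isT; have := m12 isT.
  have [->|[->|->]] := ord3 i; rewrite /= ?val_o1 ?val_o2; lia.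
by rewrite -[s]invgK e invg1.
Qed.

Lemma mkperm (i0 i1 i2 : 'I_3) : i0 != i1 -> i1 != i2 -> i0 != i2 ->
  exists σ : 'S_3, [/\ σ o0 = i0, σ o1 = i1 & σ o2 = i2].
Proof.
move=> h01 h12 h02.
pose f := fun k : 'I_3 => if k == o0 then i0 else if k == o1 then i1 else i2.
have finj : injective f.
  move=> x y; have [->|[->|->]] := ord3 x; have [->|[->|->]] := ord3 y;
    rewrite /f ?oneq ?eqxx //= => e;
    by [move: h01; rewrite e eqxx | move: h12; rewrite e eqxx
       | move: h02; rewrite e eqxx].
exists (perm finj); rewrite !permE /f ?oneq ?eqxx //.
Qed.

Lemma sort_exists (b : mon) : (b o0 != b o1 :> nat) -> (b o1 != b o2 :> nat) ->
  (b o0 != b o2 :> nat) -> exists s : 'S_3, dec (actm s b).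
Proof.
move=> n01 n12 n02.
have key : forall i0 i1 i2 : 'I_3, i0 != i1 -> i1 != i2 -> i0 != i2 ->
    (b i1 < b i0)%N -> (b i2 < b i1)%N -> exists s : 'S_3, dec (actm s b).
  move=> i0 i1 i2 a1 a2 a3 l1 l2.
  have [σ [e0 e1 e2]] := mkperm a1 a2 a3.
  by exists (σ^-1)%g; rewrite /dec !actmE invgK e0 e1 e2 l1 l2.
case: (ltngtP (b o0) (b o1)) n01 => // h01 _;
case: (ltngtP (b o1) (b o2)) n12 => // h12 _;
case: (ltngtP (b o0) (b o2)) n02 => // h02 _.
- by apply: (key o2 o1 o0); rewrite ?oneq.
- by apply: (key o2 o1 o0); rewrite ?oneq.
- by apply: (key o1 o2 o0); rewrite ?oneq.
- by apply: (key o1 o0 o2); rewrite ?oneq.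
- by apply: (key o2 o0 o1); rewrite ?oneq.
- by apply: (key o0 o2 o1); rewrite ?oneq.
- by apply: (key o0 o1 o2); rewrite ?oneq.
- by apply: (key o0 o1 o2); rewrite ?oneq.
Qed.


Lemma sign_nd (P : Alg) (b : mon) (i k : 'I_3) :
  isSign P -> i != k -> b i = b k -> P b = 0.
Proof.
move=> hP ik e.
have fix_b : actm ((tperm i k)^-1)%g b = b.
  apply/ffunP => x; rewrite actmE invgK.
  case: (eqVneq x i) => [->|xi]; first by rewrite tpermL.
  case: (eqVneq x k) => [->|xk]; first by rewrite tpermR.
  by rewrite tpermD // eq_sym.
have := isSign_pt (tperm i k) b hP; rewrite fix_b odd_tperm ik expr1 mulN1r.
move/eqP; rewrite -subr_eq0 opprK -mulr2n -mulr_natr mulf_eq0.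
by rewrite (negbTE (natr_neq0 (isT : (0 < 2)%N))) orbF => /eqP.
Qed.

Lemma sact_mono (s : 'S_3) (a : mon) : sact s (mono K a) = mono K (actm s a).
Proof.
apply/ffunP => b; rewrite sact_pt !monoE; congr ((_ : bool)%:R).
apply/eqP/eqP => [<-|->]; by rewrite ?actmKV ?actmK.
Qed.

Lemma alt_Asym (mu : mon) : alt K mu = Asym (mono K mu).
Proof. by apply: eq_bigr => s _; rewrite sact_mono. Qed.

Lemma alt_sign (mu : mon) : isSign (alt K mu).
Proof. by rewrite alt_Asym; apply: Asym_sign. Qed.

Lemma homog_mono (a : mon) : homog (deg a) (mono K a).
Proof. by move=> b; rewrite monoE; case: (eqVneq b a) => [->|_] //=; rewrite eqxx. Qed.

Lemma homog_alt (mu : mon) : homog (deg mu) (alt K mu).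
Proof. by rewrite alt_Asym; apply/homog_Asym/homog_mono. Qed.

Lemma alt_dec (mu nu : mon) : dec mu -> dec nu -> alt K mu nu = (nu == mu)%:R.
Proof.
move=> hm hn; rewrite sum_ffunE (bigD1 1%g) //= big1 ?addr0.
  by rewrite ffunE monoE actm1 /GRing.scale /= odd_perm1 expr0 mul1r.
move=> s s1; rewrite ffunE monoE; case: (eqVneq nu (actm s mu)) => [e|].
  by move: s1; rewrite (dec_uniq hm (etrans (esym (congr1 dec e)) hn)) eqxx.
by rewrite /GRing.scale /= mulr0.
Qed.


Lemma sign_via_sort (Q : Alg) (s : 'S_3) (b : mon) :
  isSign Q -> Q b = sg s * Q (actm s b).
Proof.
by move=> h; have := isSign_pt s (actm s b) h; rewrite actmK.
Qed.

Lemma sign_span j (P : Alg) : isSign P -> homog j P ->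
  P = \sum_(mu in Pplus d.-1 j%:Z) P mu *: alt K mu.
Proof.
move=> hs hh; apply/ffunP => b; rewrite sum_ffunE.
have nd : forall i k : 'I_3, i != k -> b i = b k ->
    P b = \sum_(mu in Pplus d.-1 j%:Z) (P mu *: alt K mu) b.
  move=> i k ik e; rewrite (sign_nd hs ik e) big1 // => mu _.
  by rewrite ffunE (sign_nd (alt_sign mu) ik e) /GRing.scale /= mulr0.
case: (eqVneq (b o0 : nat) (b o1)) => [e|n01]; first by apply: (nd o0 o1); rewrite ?oneq //; apply: val_inj.
case: (eqVneq (b o1 : nat) (b o2)) => [e|n12]; first by apply: (nd o1 o2); rewrite ?oneq //; apply: val_inj.
case: (eqVneq (b o0 : nat) (b o2)) => [e|n02]; first by apply: (nd o0 o2); rewrite ?oneq //; apply: val_inj.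
have [s hsb] := sort_exists n01 n12 n02.
set c := actm s b in hsb.
rewrite (sign_via_sort s b hs).
under eq_bigr => mu hmu.
  rewrite ffunE (sign_via_sort s b (alt_sign mu)) -/c.
  rewrite alt_dec //; last by move: hmu; rewrite inPplus => /andP[].
  over.
case: (boolP (c \in Pplus d.-1 j%:Z)) => hc.
  rewrite (bigD1 c) //= eqxx big1 ?addr0 => [|mu /andP[_ ne]].
    by rewrite /GRing.scale /= mulr1 mulrC.
  by rewrite eq_sym (negbTE ne) /GRing.scale /= !mulr0.
rewrite big1 => [|mu hmu].
  rewrite (homog_eq0 hh) ?mulr0 //; apply: contra hc => /eqP e.
  by rewrite inPplus hsb /= e.
case: (eqVneq c mu) => [e|ne]; first by move: hc; rewrite e hmu.
by rewrite /GRing.scale /= !mulr0.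
Qed.


Lemma E_linear : linear (@E K d).
Proof.
move=> c P Q; rewrite /E scaler_sumr -big_split; apply: eq_bigr => a _.
by rewrite ffunE [(c *: P) a]ffunE scalerDl scalerA.
Qed.

Definition sgnm (s : 'S_3) (P : Alg) : Alg := sact s P - ((-1) ^+ s) *: P.

Lemma sgnm_linear s : linear (sgnm s).
Proof.
move=> c P Q; rewrite /sgnm sact_lin scalerDr scalerA mulrC -scalerA.
rewrite scalerBr; set x := sact s P; set y := sact s Q; set z := (_ *: P).
by rewrite addrACA opprD.
Qed.

Definition EF (P : Alg) : Alg := E (Fop P).

Lemma EF_linear : linear EF.
Proof. by move=> c P Q; rewrite /EF Fop_lin E_linear. Qed.

End Dev.

HB.instance Definition _ (K : fieldType) (d : nat) :=
  GRing.isLinear.Build K (Alg K d) (Alg K d) *:%R (@E K d) (@E_linear K d).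
HB.instance Definition _ (K : fieldType) (d : nat) s :=
  GRing.isLinear.Build K (Alg K d) (Alg K d) *:%R (@sgnm K d s) (@sgnm_linear K d s).
HB.instance Definition _ (K : fieldType) (d : nat) :=
  GRing.isLinear.Build K (Alg K d) (Alg K d) *:%R (@EF K d) (@EF_linear K d).

Section Dev2.
Variable K : fieldType.
Variable d : nat.
Hypothesis d_gt0 : (0 < d)%N.
Hypothesis charK : [pchar K] =i pred0.
Local Notation mon := (mon d).
Local Notation Alg := (Alg K d).
Local Notation sg s := ((-1) ^+ (odd_perm s) : K).

Lemma ffun_expand (v : Alg) : v = \sum_a v a *: mono K a.
Proof.
apply/ffunP => b; rewrite sum_ffunE (bigD1 b) //= big1 ?addr0.
  by rewrite ffunE monoE eqxx /GRing.scale /= mulr1.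
by move=> a ne; rewrite ffunE monoE eq_sym (negbTE ne) /GRing.scale /= mulr0.
Qed.

Lemma memAhom t (v : Alg) : (v \in Ahom K d t) <-> homog t v.
Proof.
split.
  move=> hv; have := @coord_span _ _ _ (in_tuple [seq mono K a | a <- enum [pred a : mon | deg a == t]]) v hv.
  move=> ->; apply: homog_sum => i _; apply: homogZ.
  set X := [seq _ | _ <- _].
  have : X`_i \in X by apply: mem_nth; exact: ltn_ord.
  case/mapP => a; rewrite mem_enum inE => /eqP ha ->; rewrite -ha; exact: homog_mono.
move=> hv; rewrite [v]ffun_expand (bigID (fun a => deg a == t)) /=.
rewrite [X in _ + X]big1 ?addr0 => [|a /negbTE ha]; last first.
  by rewrite (homog_eq0 hv) ?ha // scale0r.
apply: memv_suml => a ha; apply: memvZ; apply: memv_span.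
by apply: map_f; rewrite mem_enum.
Qed.

Lemma memSgn s (v : Alg) :
  (v \in lker (linfun (fun P : Alg => sact s P - ((-1) ^+ s) *: P))) = (sact s v == sg s *: v).
Proof.
rewrite memv_ker; change (linfun (sgnm (K:=K) (d:=d) s) v == 0 = (sact s v == sg s *: v)).
by rewrite lfunE /= /sgnm subr_eq0.
Qed.

Lemma membigcap (U : 'S_3 -> {vspace Alg}) (v : Alg) :
  (v \in \bigcap_(s : 'S_3) U s)%VS <-> (forall s, v \in U s).
Proof.
rewrite memvE; split.
  by move/subv_bigcapP => h s; rewrite memvE h.
by move=> h; apply/subv_bigcapP => s _; rewrite -memvE.
Qed.

Definition W t : {vspace Alg} :=
  (Ahom K d t :&: \bigcap_(s : 'S_3) lker (linfun (fun P : Alg => sact s P - ((-1) ^+ s) *: P)))%VS.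

Lemma memW t (v : Alg) : v \in W t <-> homog t v /\ isSign v.
Proof.
rewrite memv_cap; split.
  case/andP => /memAhom h /membigcap h2; split => // s; apply/eqP; by rewrite -memSgn.
case=> h1 h2; apply/andP; split; first exact/memAhom.
by apply/membigcap => s; rewrite memSgn h2.
Qed.


Definition Xs t := [seq alt K mu | mu <- enum (Pplus d.-1 t%:Z)].

Lemma homog_Pplus t (mu : mon) : mu \in Pplus d.-1 t%:Z -> homog t (alt K mu).
Proof. by rewrite inPplus eqz_nat => /andP[_ /eqP <-]; apply: homog_alt. Qed.

Lemma W_span t : W t = <<Xs t>>%VS.
Proof.
apply/eqP; rewrite eqEsubv; apply/andP; split.
  apply/subvP => v /memW [h1 h2]; rewrite (sign_span d_gt0 charK h2 h1).
  apply: memv_suml => mu hmu; apply: memvZ; apply: memv_span.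
  by apply: map_f; rewrite mem_enum.
apply/span_subvP => x /mapP [mu]; rewrite mem_enum => hmu ->.
by apply/memW; split; [apply: homog_Pplus | apply: alt_sign].
Qed.

Lemma Xs_free t : free (Xs t).
Proof.
set s := enum (Pplus d.-1 t%:Z).
have szX : size (Xs t) = size s by rewrite size_map.
apply: (introT (@freeP _ _ _ (in_tuple (Xs t)))) => k hk i.
have his : (i < size s)%N by rewrite -szX ltn_ord.
pose x0 : mon := [ffun _ => ord0].
pose nu := nth x0 s i.
have decs : forall l, (l < size s)%N -> dec (nth x0 s l).
  move=> l hl; have := mem_nth x0 hl; rewrite mem_enum inPplus => /andP[] //.
have := congr1 (fun f : Alg => f nu) hk; rewrite sum_ffunE ffunE.
rewrite (bigD1 i) //= big1 ?addr0 => [|l li].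
  rewrite ffunE (nth_map x0) // alt_dec ?decs // eqxx /GRing.scale /= mulr1 => //.
have hl : (l < size s)%N by rewrite -szX ltn_ord.
rewrite ffunE (nth_map x0) // alt_dec ?decs // nth_uniq ?enum_uniq //.
by rewrite (inj_eq val_inj) eq_sym (negbTE li) /GRing.scale /= mulr0.
Qed.

Lemma dimW t : \dim (W t) = pplus d.-1 t%:Z.
Proof.
rewrite W_span; move: (Xs_free t); rewrite /free => /eqP ->.
by rewrite size_map /pplus cardE.
Qed.


Lemma img_E j : (1 <= j)%N -> (2 * j <= 3 * d.-1)%N ->
  (linfun (@E K d) @: W j)%VS = W j.-1.
Proof.
move=> j1 hj; apply/eqP; rewrite eqEsubv; apply/andP; split.
  apply/subvP => x /memv_imgP [u /memW [hu su] ->]; rewrite lfunE /=.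
  by apply/memW; split; [exact: (homog_E d_gt0) | exact: (E_sign d_gt0)].
apply/subvP => v /memW [hv sv].
set t := j.-1 in hv *.
pose U := Ahom K d t; pose G := linfun (@EF K d).
have GU : (G @: U)%VS = U.
  apply/eqP; rewrite eqEdim; apply/andP; split.
    apply/subvP => x /memv_imgP [w /memAhom hw ->]; rewrite lfunE /=; apply/memAhom.
    exact: (homog_E d_gt0 (Fop_homog hw)).
  have := limg_ker_dim G U.
  have -> : (U :&: lker G)%VS = 0%VS.
    apply/eqP; rewrite -subv0; apply/subvP => x; rewrite memv_cap => /andP[/memAhom hx].
    rewrite memv_ker lfunE /= => /eqP e; rewrite memv0; apply/eqP.
    by apply: (EF_inj d_gt0 charK _ hx e); rewrite /t; lia.
  by rewrite dimv0 add0n => ->.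
have : v \in (G @: U)%VS by rewrite GU; apply/memAhom.
case/memv_imgP => w /memAhom hw; rewrite lfunE /= => ev.
have six : (6%:R : K) != 0 := natr_neq0 d_gt0 charK (isT : (0 < 6)%N).
apply/memv_imgP; exists ((6%:R)^-1 *: Asym (Fop w)).
  apply/memW; split.
    apply/homogZ/homog_Asym; have := Fop_homog hw; rewrite /t prednK //.
  by move=> s; rewrite sactZ Asym_sign !scalerA mulrC.
rewrite lfunE /= (EZ d_gt0) (E_Asym d_gt0); rewrite /EF in ev; rewrite -ev Asym_of_sign //.
by rewrite scalerA mulVf ?scale1r.
Qed.

End Dev2.

Lemma pplus_neg l : pplus l (0%:Z - 1) = 0%N.
Proof.
rewrite /pplus; apply/eqP; rewrite cards_eq0; apply/eqP/setP => mu.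
rewrite !inE; have -> : ((\sum_(i < 3) (mu i : nat))%N%:Z == 0%Z - 1) = false by [].
by rewrite !andbF.
Qed.

Lemma pplus_zero l : pplus l 0 = 0%N.
Proof.
rewrite /pplus; apply/eqP; rewrite cards_eq0; apply/eqP/setP => mu.
rewrite !inE; apply/negbTE; apply/negP => /and3P[h1 _ /eqP h3].
have : ((mu ord0 : nat) <= \sum_(i < 3) (mu i : nat))%N.
  by rewrite (bigD1 ord0) //= leq_addr.
move: h3; rewrite -[0]/(0%N%:Z) => /eqP; rewrite eqz_nat => /eqP ->; by rewrite leqn0 => /eqP e; rewrite e in h1.
Qed.

Theorem theorem3p2 (K : closedFieldType) (charK : [pchar K] =i pred0)
  (d j : nat) (hd : (3 <= d)%N) (hj : (j <= (3 * (d - 1))./2)%N) :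
  (forall P : Alg K d,
     (homog j P /\ E P = 0 /\ forall s : 'S_3, sact s P = ((-1) ^+ s) *: P)
     <->
     ((exists beta : mon d -> K,
         P = \sum_(mu in Pplus d.-1 j%:Z) beta mu *: alt K mu) /\ E P = 0))
  /\ (signmult K d j)%:Z = (pplus d.-1 j%:Z)%:Z - (pplus d.-1 (j%:Z - 1))%:Z.
Proof.
have d0 : (0 < d)%N by lia.
have hj2 : (2 * j <= 3 * d.-1)%N.
  have h1 : (j.*2 <= (3 * (d - 1))./2.*2)%N by rewrite leq_double.
  rewrite halfK -!mul2n subn1 in h1.
  apply: leq_trans h1 _; exact: leq_subr.
split.
  move=> P; split.
    case=> hh [he hs]; split => //; exists (fun mu => P mu).
    exact: (sign_span d0 charK hs hh).
  case=> [[beta ->] he]; split; last split => //.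
    apply: homog_sum => mu hmu; apply: homogZ; exact: homog_Pplus.
  move=> s; rewrite sact_sum scaler_sumr; apply: eq_bigr => mu _.
  by rewrite sactZ alt_sign !scalerA mulrC.
rewrite /signmult /signspace.
have -> : (Ahom K d j :&: lker (linfun (@E K d)) :&:
    \bigcap_(s : 'S_3) lker (linfun (fun P : Alg K d => sact s P - ((-1) ^+ s) *: P)))%VS
    = (W K d j :&: lker (linfun (@E K d)))%VS.
  by rewrite /W -capvA [(lker _ :&: _)%VS]capvC capvA.
have := limg_ker_dim (linfun (@E K d)) (W K d j).
rewrite !(dimW d0 charK).
case: j hj hj2 => [|j'] hj hj2.
  rewrite pplus_neg pplus_zero => e.
  move: e; set a := \dim (_ :&: _)%VS; move=> e; have -> : a = 0%N by lia.
  by [].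
rewrite (img_E d0 charK) // (dimW d0 charK) /= => e.
have -> : (j'.+1%:Z - 1 = j'%:Z)%R by rewrite -[j'.+1]addn1 PoszD addrK.
by rewrite -e PoszD addrK.
Qed.
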